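(* Let $\boldsymbol{H}$ be a self-adjoint operator on $L^{2}(\mathbb{Z}_{p})$ defined on $\mathcal{D}(\mathbb{Z}_{p})$, with unitary group $e^{-i\boldsymbol{H}t}$. Let $\mathcal{N}\subset\mathbb{Z}_{p}$ have measure zero and $\{\mathcal{K}_{j}\}_{j\in\mathbb{J}}$ be pairwise disjoint open compact subsets with $\mathbb{Z}_{p}\smallsetminus\mathcal{N}=\bigsqcup_{j\in\mathbb{J}}\mathcal{K}_{j}$, where $\mathbb{J}$ is a finite set. Put $e_{v}=c_{v}1_{\mathcal{K}_{v}}$ with $\|e_v\|_2=1$, and assume $\mathcal{H}_{\mathbb{J}}:=\mathrm{Span}\{e_j;\ j\in\mathbb{J}\}$ is a Hilbert subspace of $L^2(\mathbb{Z}_p)$. For $r,v\in\mathbb{J}$ set $\pi_{r,v}(t)=|\langle e_{r},e^{-i\boldsymbol{H}t}e_{v}\rangle|^{2}$; introduce an extra state $\infty$ and set $\pi_{\infty,v}(t)=1-\sum_{r\in\mathbb{J}}\pi_{r,v}(t)$ for $v\in\mathbb{J}$, $\pi_{s,\infty}(t)=0$ for $s\in\mathbb{J}$ and $\pi_{\infty,\infty}(t)=1$, for all $t\ge0$. Then $[\pi_{s,r}(t)]_{s,r\in\mathbb{J}\cup\{\infty\}}$ is the transition matrix of a continuous-time quantum Markov chain with state space $\mathbb{J}\cup\{\infty\}$.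
   Context: $p$ is a fixed prime; $\mathbb{Z}_p$ carries the Haar measure with $\int_{\mathbb{Z}_p}dx=1$; $\langle f,g\rangle=\int f\overline g\,dx$. By the transition matrix of a continuous-time quantum Markov chain on a state space $S$ the paper means a family $[\pi_{s,r}(t)]_{s,r\in S}$, $t\ge0$, with $\pi_{s,r}(t)\in[0,1]$ and $\sum_{s\in S}\pi_{s,r}(t)=1$ for all $r\in S$, $t\ge 0$, interpreted as the probability of being in state $s$ at time $t$ having started in $r$. *)

(* Defs.v *)
From HB Require Import structures.
From mathcomp Require Import all_boot all_order all_algebra.
From mathcomp Require Import all_classical all_reals all_analysis.
From mathcomp Require Import complex.

Set Implicit Arguments.
Unset Strict Implicit.
Unset Printing Implicit Defensive.

Import Order.TTheory GRing.Theory Num.Theory.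
Import numFieldNormedType.Exports.

Local Open Scope classical_set_scope.
Local Open Scope ring_scope.

(* The p-adic integers Z_p, as sequences of p-adic digits                   *)
(*   x = a_0 + a_1 p + a_2 p^2 + ...,   a_k in {0,...,p-1},                 *)
(* (this is exactly the p-adic topology: the basic open sets are the balls  *)
(*  a + p^n Z_p = "first n digits prescribed").                             *)
(* 'Z_p is {0,...,p-1} as soon as p >= 2 (p is prime in the statement).     *)
Definition Zpad (p : nat) : Type :=
  prod_topology (fun _ : nat => discrete_topology 'Z_p).

Definition I01 (R : realType) : set R := `[(0 : R), 1[%classic.

(* p-adic digit map [0,1) -> Z_p : r = sum_k a_k p^{-k-1}  |->  (a_k)_k.   *)
Definition pdigits (R : realType) (p : nat) (r : R) : Zpad p :=
  fun k => inZp `|Num.floor (r * (p%:R) ^+ k.+1)|%N.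

(* Normalized Haar measure on Z_p: it is the push-forward of the Lebesgue
   measure on [0,1) under the digit map (the digits of a uniform point of
   [0,1) are i.i.d. uniform on {0,..,p-1}).  Accordingly:                   *)

Definition Zp_null (R : realType) (p : nat) (N : set (Zpad p)) : Prop :=
  (@lebesgue_measure R).-negligible
     [set r : R | (@I01 R) r /\ N (pdigits p r)].

Definition Zp_ae_eq (R : realType) (p : nat) (f g : Zpad p -> R[i]) : Prop :=
  Zp_null R [set x | f x <> g x].

(* Square-integrable complex functions on Z_p: the elements of L^2(Z_p)
   (L^2(Z_p) itself being the quotient by Zp_ae_eq).                        *)
Definition Zp_L2 (R : realType) (p : nat) (f : Zpad p -> R[i]) : Prop :=
  [/\ measurable_fun (@I01 R) (fun r : R => complex.Re (f (pdigits p r))),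
      measurable_fun (@I01 R) (fun r : R => complex.Im (f (pdigits p r))) &
      (\int[@lebesgue_measure R]_(r in (@I01 R))
          ((ComplexField.Normc.normc (f (pdigits p r))) ^+ 2)%:E < +oo)%E].

Definition Zp_ip (R : realType) (p : nat) (f g : Zpad p -> R[i]) : R[i] :=
  let h := fun r : R => f (pdigits p r) * Num.conj (g (pdigits p r)) in
  Complex (Rintegral (@lebesgue_measure R) (@I01 R)
                     (fun r => complex.Re (h r)))
          (Rintegral (@lebesgue_measure R) (@I01 R)
                     (fun r => complex.Im (h r))).

Definition Zp_norm2 (R : realType) (p : nat) (f : Zpad p -> R[i]) : R :=
  Num.sqrt (complex.Re (Zp_ip f f)).

(* D(Z_p): the Bruhat-Schwartz test functions = locally constant functions
   (Z_p is compact, so compact support is automatic).                       *)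
Definition Zp_test (R : realType) (p : nat) (f : Zpad p -> R[i]) : Prop :=
  forall x : Zpad p, \forall y \near x, f y = f x.

(* U : R -> (functions on Z_p) is a strongly continuous one-parameter group
   of unitary operators of L^2(Z_p) (acting on representatives).             *)
Definition unitary_group (R : realType) (p : nat)
    (U : R -> (Zpad p -> R[i]) -> (Zpad p -> R[i])) : Prop :=
  [/\ (forall t f, Zp_L2 f -> Zp_L2 (U t f)),
      (forall t f g, Zp_L2 f -> Zp_L2 g -> Zp_ae_eq f g ->
                     Zp_ae_eq (U t f) (U t g)),
      (forall t (a : R[i]) f g, Zp_L2 f -> Zp_L2 g ->
         Zp_ae_eq (U t (fun x => a * f x + g x))
                  (fun x => a * U t f x + U t g x)),
      (forall t f g, Zp_L2 f -> Zp_L2 g -> Zp_ip (U t f) (U t g) = Zp_ip f g) &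
      [/\ (forall f, Zp_L2 f -> Zp_ae_eq (U 0 f) f),
      (forall s t f, Zp_L2 f -> Zp_ae_eq (U (s + t) f) (U s (U t f))) &
      (forall f t0, Zp_L2 f ->
         (fun t => Zp_norm2 (fun x => U t f x - U t0 f x)) @ t0 --> (0 : R))]].

(* H is a (essentially) self-adjoint operator of L^2(Z_p) defined on D(Z_p):
   linear and symmetric on D(Z_p), with Ran(H + i) and Ran(H - i) dense. *)
Definition selfadjoint_on_test (R : realType) (p : nat)
    (H : (Zpad p -> R[i]) -> (Zpad p -> R[i])) : Prop :=
  [/\ (forall f, Zp_test f -> Zp_L2 (H f)),
      (forall (a : R[i]) f g, Zp_test f -> Zp_test g ->
         Zp_ae_eq (H (fun x => a * f x + g x)) (fun x => a * H f x + H g x)),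
      (forall f g, Zp_test f -> Zp_test g -> Zp_ip (H f) g = Zp_ip f (H g)) &
      (forall (s : R[i]) g (eps : R), (s = 'i%C \/ s = - 'i%C) ->
         Zp_L2 g -> 0 < eps ->
         exists f, Zp_test f /\
           Zp_norm2 (fun x => H f x + s * f x - g x) < eps)].

(* U(t) = e^{-iHt}: U is a unitary group whose generator is -iH on D(Z_p):
   (U(t) f - f)/t -> -i H f in L^2 as t -> 0, for every f in D(Z_p).        *)
Definition is_exp_group (R : realType) (p : nat)
    (H : (Zpad p -> R[i]) -> (Zpad p -> R[i]))
    (U : R -> (Zpad p -> R[i]) -> (Zpad p -> R[i])) : Prop :=
  unitary_group U /\
  forall f, Zp_test f ->
    (fun t : R => Zp_norm2 (fun x => (U t f x - f x) / Complex t 0 + 'i%C * H f x))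
      @ 0^' --> (0 : R).

Definition Zp_ind (R : realType) (p : nat) (A : set (Zpad p)) : Zpad p -> R[i] :=
  fun x => Complex (\1_A x : R) 0.

(* Extension of a J x J family to the state space J u {oo} = option J
   (None = oo), as in the statement.                                         *)
Definition ext_infty (R : realType) (J : finType) (pi : R -> J -> J -> R)
    (t : R) (s r : option J) : R :=
  match s, r with
  | Some s, Some r => pi t s r
  | None, Some r => 1 - \sum_(j : J) pi t j r
  | Some _, None => 0
  | None, None => 1
  end.

Definition transition_matrix (R : realType) (S : finType)
    (P : R -> S -> S -> R) : Prop :=
  forall t : R, 0 <= t ->
    (forall s r, 0 <= P t s r <= 1) /\ (forall r, \sum_(s : S) P t s r = 1).

(* Main.v *)
Require Import Defs.
From HB Require Import structures.
From mathcomp Require Import all_boot all_order all_algebra.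
From mathcomp Require Import all_classical all_reals all_analysis.
From mathcomp Require Import complex.
From mathcomp Require Import measurable_realfun.
From mathcomp Require Import ring lra.
Import Order.TTheory GRing.Theory Num.Theory.
Import numFieldNormedType.Exports.
Local Open Scope classical_set_scope.
Local Open Scope ring_scope.
Set Implicit Arguments. Unset Strict Implicit. Unset Printing Implicit Defensive.
Section M.
Variables (R : realType) (p : nat).
Hypothesis p0 : (0 < p)%N.
Local Notation D := (@I01 R).

Lemma I01E (r : R) : D r = (0 <= r < 1).
Proof. by rewrite /I01 /= in_itv /=. Qed.

Lemma mI01_ : measurable D.
Proof. exact: measurable_itv. Qed.

Lemma digit_meas (k : nat) (a : 'Z_p) :
  measurable [set r : R | D r /\ pdigits p r k = a].
Proof.
set q : R := (p%:R) ^+ k.+1.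
have q0 : 0 < q by rewrite exprn_gt0 // ltr0n.
have -> : [set r : R | D r /\ pdigits p r k = a] =
  \bigcup_(j in [set j : nat | inZp j = a :> 'Z_p])
     (D `&` [set` Interval (BLeft (j%:R / q)) (BLeft (j.+1%:R / q))]).
  apply/seteqP; split => r /=.
  - move=> [Ir <-]; have := Ir; rewrite I01E => /andP[r0 r1].
    have fl0 : (0 <= Num.floor (r * q))%R.
      by rewrite floor_ge0 mulr_ge0 // ltW.
    exists `|Num.floor (r * q)|%N => //; split => //.
    rewrite /= in_itv /= ler_pdivrMr // ltr_pdivlMr //.
    have := floor_itv (r * q).
    case: (Num.floor (r * q)) fl0 => // n _.
    by rewrite -[(Posz n + 1)%R]/(Posz (n + 1)%N) addn1.
  - move=> [j <-] [Ir] /=; rewrite in_itv /= ler_pdivrMr // ltr_pdivlMr // => Hj.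
    split => //; rewrite /pdigits.
    have -> : Num.floor (r * q) = j%:Z.
      by apply: floor_def; rewrite -[(Posz j + 1)%R]/(Posz (j + 1)%N) addn1; exact: Hj.
    by [].
apply: bigcup_measurable => j _; apply: measurableI; first exact: mI01_.
exact: measurable_itv.
Qed.


Definition cylF (x : Zpad p) : set_system (Zpad p) :=
  [set U | exists n : nat, forall y : Zpad p, (forall k, (k < n)%N -> y k = x k) -> U y].

Lemma cylF_filter (x : Zpad p) : Filter (cylF x).
Proof.
split.
- by exists 0%N.
- move=> P Q [n Hn] [m Hm]; exists (maxn n m) => y Hy; split.
  + apply: Hn => k kn; apply: Hy; rewrite leq_max kn //.
  + apply: Hm => k kn; apply: Hy; rewrite leq_max kn orbT //.
- move=> P Q PQ [n Hn]; exists n => y Hy; exact/PQ/Hn.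
Qed.

Lemma open_cyl (K : set (Zpad p)) x : open K -> K x ->
  exists n : nat, forall y : Zpad p, (forall k, (k < n)%N -> y k = x k) -> K y.
Proof.
move=> oK Kx.
have : cylF x --> x.
  apply/cvg_sup; first exact: cylF_filter.
  move=> i A /=; rewrite /nbhs /= => -[B [[C oC <-] Bx] BA].
  exists i.+1 => y Hy; apply: BA; rewrite /= Hy //.
move=> /(_ K); apply. exact: open_nbhs_nbhs.
Qed.

Lemma pre_open_meas (K : set (Zpad p)) : open K ->
  measurable (D `&` (pdigits p @^-1` K)).
Proof.
move=> oK.
have -> : D `&` (pdigits p @^-1` K) =
  \bigcup_(n : nat) \bigcup_(s in [set s : {ffun 'I_n -> 'Z_p} |
        forall y : Zpad p, (forall i : 'I_n, y i = s i) -> K y])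
     (D `&` \bigcap_(i in [set: 'I_n]) [set r | D r /\ pdigits p r i = s i]).
  apply/seteqP; split => r /=.
  - move=> [Dr Kr]; have [n Hn] := open_cyl oK Kr.
    exists n => //; exists [ffun i : 'I_n => pdigits p r i].
      move=> y Hy /=; apply: Hn => k kn.
      by rewrite (Hy (Ordinal kn)) ffunE.
    by split => // i _; rewrite ffunE.
  - move=> [n _ [s Hs [Dr Hr]]]; split => //; apply: Hs => i.
    by have [] := Hr i I.
apply: bigcupT_measurable => n; apply: fin_bigcup_measurable.
  exact: finite_finset.
move=> s _; apply: measurableI; first exact: mI01_.
apply: fin_bigcap_measurable; first exact: finite_finset.
move=> i _; exact: digit_meas.
Qed.

End M.
Section A.
Variables (R : realType).
Local Notation D := (@I01 R).
Local Notation mu := (@lebesgue_measure R).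

Lemma mI01 : measurable D.
Proof. exact: measurable_itv. Qed.

Lemma muD : mu D = 1%E.
Proof. by rewrite /I01 lebesgue_measure_itv /= lte_fin ltr01 oppr0 adde0. Qed.

Lemma int_cst (k : R) : mu.-integrable D (fun _ => k%:E).
Proof.
apply/integrableP; split; first exact: measurable_cst.
rewrite (eq_integral (cst `|k|%:E)) // integral_cst; last exact: mI01.
apply: lte_mul_pinfty => //.
exact (eq_ind_r (fun z => (z < +oo)%E) (ltry 1) (muD)).
Qed.

Lemma eqI (f g : R -> \bar R) : {in D, f =1 g} -> mu.-integrable D f -> mu.-integrable D g.
Proof. move=> fg fi; exact: (@eq_integrable _ _ _ mu D mI01 f g fg fi). Qed.

Lemma ZlI (k : R) (f : R -> R) : mu.-integrable D (EFin \o f) ->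
  mu.-integrable D (EFin \o (fun x => k * f x)).
Proof.
move=> fi; have := (@integrableZl _ _ _ mu D mI01 k _ fi).
by apply: eqI => x _ /=; rewrite EFinM.
Qed.

Lemma BI (f g : R -> R) : mu.-integrable D (EFin \o f) -> mu.-integrable D (EFin \o g) ->
  mu.-integrable D (EFin \o (fun x => f x - g x)).
Proof.
move=> fi gi; have := (@integrableB _ _ _ mu D mI01 _ _ fi gi).
by apply: eqI => x _ /=; rewrite EFinB.
Qed.

Lemma DI (f g : R -> R) : mu.-integrable D (EFin \o f) -> mu.-integrable D (EFin \o g) ->
  mu.-integrable D (EFin \o (fun x => f x + g x)).
Proof.
move=> fi gi; have := (@integrableD _ _ _ mu D mI01 _ _ fi gi).
by apply: eqI => x _ /=; rewrite EFinD.
Qed.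

Lemma RD (f g : R -> R) : mu.-integrable D (EFin \o f) -> mu.-integrable D (EFin \o g) ->
  \int[mu]_(x in D) (f x + g x) = \int[mu]_(x in D) f x + \int[mu]_(x in D) g x.
Proof. move=> fi gi; apply: RintegralD => //; exact: mI01. Qed.

Lemma RB (f g : R -> R) : mu.-integrable D (EFin \o f) -> mu.-integrable D (EFin \o g) ->
  \int[mu]_(x in D) (f x - g x) = \int[mu]_(x in D) f x - \int[mu]_(x in D) g x.
Proof. move=> fi gi; apply: RintegralB => //; exact: mI01. Qed.

Lemma RZ (k : R) (f : R -> R) : mu.-integrable D (EFin \o f) ->
  \int[mu]_(x in D) (k * f x) = k * \int[mu]_(x in D) f x.
Proof. move=> fi; apply: RintegralZl => //; exact: mI01. Qed.

Lemma int_sq (u : R -> R) : measurable_fun D u ->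
  (\int[mu]_(x in D) ((u x) ^+ 2)%:E < +oo)%E ->
  mu.-integrable D (EFin \o (fun x => u x ^+ 2)).
Proof.
move=> mu_ fin; apply/integrableP; split.
  by apply/measurable_EFinP; exact: measurable_funX.
apply: le_lt_trans fin; rewrite le_eqVlt; apply/orP; left; apply/eqP; apply: eq_integral.
by move=> x _ /=; rewrite ger0_norm // sqr_ge0.
Qed.

Lemma int_L2 (u : R -> R) : measurable_fun D u ->
  (\int[mu]_(x in D) ((u x) ^+ 2)%:E < +oo)%E ->
  mu.-integrable D (EFin \o u).
Proof.
move=> mu_ fin.
have i2 := int_sq mu_ fin.
have i12 : mu.-integrable D (fun x => 1%:E + (u x ^+ 2)%:E)%E.
  by apply: integrableD; (exact: mI01 || exact: (int_cst 1) || exact: i2).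
apply: le_integrable i12; [exact: mI01|by apply/measurable_EFinP|].
move=> x _ /=; rewrite lee_fin.
rewrite [X in _ <= X]ger0_norm ?addr_ge0 ?sqr_ge0 //.
have := sqr_ge0 (`|u x| - 1); rewrite sqrrB real_normK ?num_real // expr1n mulr1.
nra.
Qed.

Lemma int_w (f w : R -> R) : measurable_fun D w -> (forall x, 0 <= w x <= 1) ->
  mu.-integrable D (EFin \o f) ->
  mu.-integrable D (EFin \o (fun x => w x * f x)).
Proof.
move=> mw w01 fi.
have mf : measurable_fun D f by apply/measurable_EFinP; exact: measurable_int fi.
apply: le_integrable fi; first exact: mI01.
  by apply/measurable_EFinP; apply: measurable_funM.
move=> x _ /=; rewrite lee_fin normrM.
have /andP[w0 w1] := w01 x.
by rewrite ger0_norm // ler_piMl.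
Qed.

Lemma CS (w u : R -> R) : measurable_fun D w -> (forall x, 0 <= w x <= 1) ->
  measurable_fun D u -> (\int[mu]_(x in D) ((u x) ^+ 2)%:E < +oo)%E ->
  0 < \int[mu]_(x in D) w x ->
  (\int[mu]_(x in D) (w x * u x)) ^+ 2 <=
    \int[mu]_(x in D) w x * \int[mu]_(x in D) (w x * u x ^+ 2).
Proof.
move=> mw w01 mu_ fin L0.
set L := \int[mu]_(x in D) w x.
set S := \int[mu]_(x in D) (w x * u x).
set Q := \int[mu]_(x in D) (w x * u x ^+ 2).
have iw : mu.-integrable D (EFin \o w).
  have := @int_w (fun=> 1) w mw w01 (int_cst 1).
  by apply: eqI => x _ /=; rewrite mulr1.
have iwu := int_w mw w01 (int_L2 mu_ fin).
have iwu2 := int_w mw w01 (int_sq mu_ fin).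
have H : 0 <= \int[mu]_(x in D) (w x * (L * u x - S) ^+ 2).
  apply: Rintegral_ge0 => x _; have /andP[w0 _] := w01 x.
  by rewrite mulr_ge0 // sqr_ge0.
have E : \int[mu]_(x in D) (w x * (L * u x - S) ^+ 2) =
   \int[mu]_(x in D) ((L ^+ 2 * (w x * u x ^+ 2) - (2 * L * S) * (w x * u x))
                       + S ^+ 2 * w x).
  by apply: eq_Rintegral => x _; ring.
move: H; rewrite E RD; last 2 first.
- by apply: BI; apply: ZlI.
- exact: ZlI.
rewrite RB; try exact: ZlI.
rewrite !RZ // -/L -/S -/Q => H.
have : 0 <= L * (L * Q - S ^+ 2) by nra.
rewrite pmulr_rge0 // subr_ge0 //.
Qed.

End A.
Section C.
Variable R : realType.
Lemma normc2 (z : R[i]) : ComplexField.Normc.normc z ^+ 2 = complex.Re z ^+ 2 + complex.Im z ^+ 2.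
Proof. by case: z => a b; rewrite /ComplexField.Normc.normc /= sqr_sqrtr // addr_ge0 // sqr_ge0. Qed.

Lemma ReC (c z : R[i]) (w : R) :
  complex.Re (c * Complex w 0 * Num.conj z) = w * (complex.Re c * complex.Re z + complex.Im c * complex.Im z).
Proof. case: c => a b; case: z => x y /=. ring. Qed.

Lemma ImC (c z : R[i]) (w : R) :
  complex.Im (c * Complex w 0 * Num.conj z) = w * (complex.Im c * complex.Re z - complex.Re c * complex.Im z).
Proof. case: c => a b; case: z => x y /=. ring. Qed.

Lemma ReCC (z : R[i]) : complex.Re (z * Num.conj z) = complex.Re z ^+ 2 + complex.Im z ^+ 2.
Proof. case: z => x y /=. ring. Qed.
End C.

Section A2.
Variables (R : realType).
Local Notation D := (@I01 R).
Local Notation mu := (@lebesgue_measure R).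

Lemma int0 : mu.-integrable D (EFin \o (fun _ : R => (0 : R))).
Proof.
have := @ZlI R 0 (fun=> 1) (int_cst 1).
by apply: eqI => x _ /=; rewrite mul0r.
Qed.

Lemma R0 : \int[mu]_(x in D) (0 : R) = 0.
Proof.
rewrite (@eq_Rintegral _ _ _ mu D (fun x => 0 * 1)); last by move=> x _; rewrite mul0r.
by rewrite (@RZ R 0 (fun=> 1)) ?mul0r //; exact: int_cst.
Qed.

Lemma sumI (I : Type) (s : seq I) (f : I -> R -> R) :
  (forall i, mu.-integrable D (EFin \o f i)) ->
  mu.-integrable D (EFin \o (fun x => \sum_(i <- s) f i x)).
Proof.
move=> fi; elim: s => [|i s IH].
  by apply: eqI int0 => x _ /=; rewrite big_nil.
have := DI (fi i) IH.
by apply: eqI => x _ /=; rewrite big_cons.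
Qed.

Lemma RS (I : Type) (s : seq I) (f : I -> R -> R) :
  (forall i, mu.-integrable D (EFin \o f i)) ->
  \int[mu]_(x in D) (\sum_(i <- s) f i x) = \sum_(i <- s) \int[mu]_(x in D) f i x.
Proof.
move=> fi; elim: s => [|i s IH].
  transitivity (\int[mu]_(x in D) (0:R)).
    by apply: eq_Rintegral => x _; rewrite big_nil.
  by rewrite R0 big_nil.
rewrite big_cons -IH -RD; try exact: fi; try exact: sumI.
by apply: eq_Rintegral => x _; rewrite big_cons.
Qed.

Lemma sqrt_eq1 (x : R) : Num.sqrt x = 1 -> x = 1.
Proof.
case: (ltrP x 0) => hx.
  by rewrite ltr0_sqrtr // => /eqP; rewrite eq_sym oner_eq0.
by move=> h; rewrite -(sqr_sqrtr hx) h expr1n.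
Qed.

Lemma sum_opt (J : finType) (F : option J -> R) :
  \sum_(s : option J) F s = F None + \sum_(j : J) F (Some j).
Proof.
rewrite (perm_big (None :: map Some (index_enum J))) /=; last first.
  apply: uniq_perm.
  - exact: index_enum_uniq.
  - rewrite /= map_inj_uniq ?index_enum_uniq // andbT.
    by apply/mapP => -[x].
  - by case=> [x|]; rewrite mem_index_enum /= ?inE ?(mem_map Some_inj) ?mem_index_enum.
by rewrite big_cons big_map.
Qed.

End A2.

Section Main.
Variables (R : realType) (p : nat) (J : finType) (K : J -> set (Zpad p)) (c : J -> R[i]).
Hypothesis p0 : (0 < p)%N.
Hypothesis oK : forall j, open (K j).
Hypothesis disj : forall j k, j != k -> K j `&` K k = set0.
Hypothesis nrm : forall v, Zp_norm2 (fun x => c v * Zp_ind R (K v) x) = 1.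
Local Notation D := (@I01 R).
Local Notation mu := (@lebesgue_measure R).

Let e j := fun x => c j * Zp_ind R (K j) x.
Let w j (r : R) : R := \1_(K j) (pdigits p r).

Lemma mw j : measurable_fun D (w j).
Proof.
have H : measurable_fun D (\1_(D `&` (pdigits p @^-1` K j)) : R -> R).
  by apply: measurable_indic; apply: pre_open_meas.
have E : {in D, (\1_(D `&` (pdigits p @^-1` K j)) : R -> R) =1 w j}.
  move=> r /set_mem Dr; rewrite /w !indicE; congr (_%:R).
  rewrite in_setI (mem_set Dr) /=.
  first [ by [] | by rewrite !inE | by rewrite /preimage !in_setE | (apply/idP/idP; rewrite !in_setE //) ].
exact: (eq_measurable_fun _ E H).
Qed.

Lemma w01 j r : 0 <= w j r <= 1.
Proof. by rewrite /w indicE; case: (_ \in _); rewrite ?lexx ?ler01. Qed.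

Lemma ww j r : w j r * w j r = w j r.
Proof. by rewrite /w indicE; case: (_ \in _); rewrite ?mulr0 ?mulr1. Qed.

Lemma iw j : mu.-integrable D (EFin \o w j).
Proof.
have := @int_w R (fun=> 1) (w j) (mw j) (w01 j) (int_cst 1).
by apply: eqI => x _ /=; rewrite mulr1.
Qed.

Lemma L2_parts (g : Zpad p -> R[i]) : Zp_L2 g ->
  [/\ measurable_fun D (fun r => complex.Re (g (pdigits p r))),
      measurable_fun D (fun r => complex.Im (g (pdigits p r))),
      (\int[mu]_(x in D) ((complex.Re (g (pdigits p x))) ^+ 2)%:E < +oo)%E &
      (\int[mu]_(x in D) ((complex.Im (g (pdigits p x))) ^+ 2)%:E < +oo)%E].
Proof.
move=> [mre mim fin]; split => //.
- apply: le_lt_trans fin; apply: ge0_le_integral => //.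
  + exact: mI01.
  + by move=> x _; rewrite lee_fin sqr_ge0.
  + by apply/measurable_EFinP; apply: measurable_funX.
  + apply/measurable_EFinP.
    have H : measurable_fun D (fun x => (complex.Re (g (pdigits p x))) ^+ 2 +
          (complex.Im (g (pdigits p x))) ^+ 2).
      by apply: measurable_funD; apply: measurable_funX.
    by apply: (eq_measurable_fun _ _ H) => x _; rewrite normc2.
  + by move=> x _; rewrite normc2 lee_fin lerDl sqr_ge0.
- apply: le_lt_trans fin; apply: ge0_le_integral => //.
  + exact: mI01.
  + by move=> x _; rewrite lee_fin sqr_ge0.
  + by apply/measurable_EFinP; apply: measurable_funX.
  + apply/measurable_EFinP.
    have H : measurable_fun D (fun x => (complex.Re (g (pdigits p x))) ^+ 2 +
          (complex.Im (g (pdigits p x))) ^+ 2).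
      by apply: measurable_funD; apply: measurable_funX.
    by apply: (eq_measurable_fun _ _ H) => x _; rewrite normc2.
  + by move=> x _; rewrite normc2 lee_fin lerDr sqr_ge0.
Qed.

Lemma Re_e v r : complex.Re (e v (pdigits p r)) = complex.Re (c v) * w v r.
Proof. rewrite /e /Zp_ind /w; case: (c v) => a b /=; ring. Qed.

Lemma Im_e v r : complex.Im (e v (pdigits p r)) = complex.Im (c v) * w v r.
Proof. rewrite /e /Zp_ind /w; case: (c v) => a b /=; ring. Qed.

Lemma L2_e v : Zp_L2 (e v).
Proof.
split.
- have H : measurable_fun D (fun r => complex.Re (c v) * w v r).
    by apply: measurable_funM => //; exact: mw.
  by apply: (eq_measurable_fun _ _ H) => r _; rewrite Re_e.
- have H : measurable_fun D (fun r => complex.Im (c v) * w v r).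
    by apply: measurable_funM => //; exact: mw.
  by apply: (eq_measurable_fun _ _ H) => r _; rewrite Im_e.
- set k := complex.Re (c v) ^+ 2 + complex.Im (c v) ^+ 2.
  have k0 : 0 <= k by rewrite /k addr_ge0 // sqr_ge0.
  move/integrableP: (ZlI k (iw v)) => [_ fin].
  apply: le_lt_trans fin; rewrite le_eqVlt; apply/orP; left; apply/eqP.
  apply: eq_integral => x _ /=.
  rewrite normc2 Re_e Im_e ger0_norm; last by rewrite mulr_ge0 //; case/andP: (w01 v x).
  congr (_%:E); have := ww v x; move: (w v x) => y hy.
  by transitivity (k * (y * y)); [rewrite /k; ring | rewrite hy].
Qed.

Lemma ip_e r (g : Zpad p -> R[i]) : Zp_ip (e r) g =
  Complex (\int[mu]_(x in D) (w r x * (complex.Re (c r) * complex.Re (g (pdigits p x))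
                              + complex.Im (c r) * complex.Im (g (pdigits p x)))))
          (\int[mu]_(x in D) (w r x * (complex.Im (c r) * complex.Re (g (pdigits p x))
                              - complex.Re (c r) * complex.Im (g (pdigits p x))))).
Proof.
rewrite /Zp_ip; congr Complex; apply: eq_Rintegral => x _ /=.
- exact: ReC.
- exact: ImC.
Qed.

Lemma Re_norm v : complex.Re (Zp_ip (e v) (e v)) = 1.
Proof. exact: sqrt_eq1 (nrm v). Qed.

Lemma cL r : (complex.Re (c r) ^+ 2 + complex.Im (c r) ^+ 2) * \int[mu]_(x in D) w r x = 1.
Proof.
rewrite -(Re_norm r) ip_e /= -RZ; last exact: iw.
apply: eq_Rintegral => x _; rewrite Re_e Im_e.
have := ww r x; move: (w r x) => y hy.
by transitivity ((complex.Re (c r) ^+ 2 + complex.Im (c r) ^+ 2) * (y * y)); [rewrite hy | ring].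
Qed.

Lemma pi_bound r (g : Zpad p -> R[i]) : Zp_L2 g ->
  ComplexField.Normc.normc (Zp_ip (e r) g) ^+ 2 <=
  \int[mu]_(x in D) (w r x * (complex.Re (g (pdigits p x)) ^+ 2 +
                              complex.Im (g (pdigits p x)) ^+ 2)).
Proof.
move=> Hg; have [mre mim f1 f2] := L2_parts Hg.
pose gr := fun x : R => complex.Re (g (pdigits p x)).
pose gi := fun x : R => complex.Im (g (pdigits p x)).
pose a := complex.Re (c r); pose b := complex.Im (c r).
have i1 : mu.-integrable D (EFin \o (fun x => w r x * gr x)).
  exact: int_w (mw r) (w01 r) (int_L2 mre f1).
have i2 : mu.-integrable D (EFin \o (fun x => w r x * gi x)).
  exact: int_w (mw r) (w01 r) (int_L2 mim f2).
have j1 : mu.-integrable D (EFin \o (fun x => w r x * gr x ^+ 2)).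
  exact: int_w (mw r) (w01 r) (int_sq mre f1).
have j2 : mu.-integrable D (EFin \o (fun x => w r x * gi x ^+ 2)).
  exact: int_w (mw r) (w01 r) (int_sq mim f2).
pose A := \int[mu]_(x in D) (w r x * gr x).
pose B := \int[mu]_(x in D) (w r x * gi x).
pose L := \int[mu]_(x in D) w r x.
pose Q1 := \int[mu]_(x in D) (w r x * gr x ^+ 2).
pose Q2 := \int[mu]_(x in D) (w r x * gi x ^+ 2).
have kL : (a ^+ 2 + b ^+ 2) * L = 1 by exact: cL.
have L0 : 0 < L.
  have L0' : 0 <= L by apply: Rintegral_ge0 => x _; case/andP: (w01 r x).
  rewrite lt_neqAle L0' andbT; apply/eqP => L0.
  by move: kL; rewrite -L0 mulr0 => /eqP; rewrite eq_sym oner_eq0.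
have hA : A ^+ 2 <= L * Q1 by exact: CS (mw r) (w01 r) mre f1 L0.
have hB : B ^+ 2 <= L * Q2 by exact: CS (mw r) (w01 r) mim f2 L0.
have ER : \int[mu]_(x in D) (w r x * (a * gr x + b * gi x)) = a * A + b * B.
  rewrite /A /B -(RZ a i1) -(RZ b i2) -RD; try exact: ZlI.
  by apply: eq_Rintegral => x _; ring.
have EI : \int[mu]_(x in D) (w r x * (b * gr x - a * gi x)) = b * A - a * B.
  rewrite /A /B -(RZ b i1) -(RZ a i2) -RB; try exact: ZlI.
  by apply: eq_Rintegral => x _; ring.
have EQ : \int[mu]_(x in D) (w r x * (gr x ^+ 2 + gi x ^+ 2)) = Q1 + Q2.
  rewrite /Q1 /Q2 -RD //.
  by apply: eq_Rintegral => x _; ring.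
rewrite normc2 ip_e /=.
change ((\int[mu]_(x in D) (w r x * (a * gr x + b * gi x))) ^+ 2 +
        (\int[mu]_(x in D) (w r x * (b * gr x - a * gi x))) ^+ 2 <=
        \int[mu]_(x in D) (w r x * (gr x ^+ 2 + gi x ^+ 2))).
rewrite ER EI EQ.
have k0 : 0 <= a ^+ 2 + b ^+ 2 by rewrite addr_ge0 // sqr_ge0.
have -> : (a * A + b * B) ^+ 2 + (b * A - a * B) ^+ 2 = (a ^+ 2 + b ^+ 2) * (A ^+ 2 + B ^+ 2).
  by ring.
apply: (le_trans (ler_wpM2l k0 (lerD hA hB))).
by rewrite -mulrDr mulrA kL mul1r.
Qed.

Lemma sum_w x : \sum_(j : J) w j x <= 1.
Proof.
case: (pselect (exists r0, K r0 (pdigits p x))) => [[r0 Hr0]|Hn].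
  rewrite (bigD1 r0) //= big1 ?addr0.
    by rewrite /w indicE (mem_set Hr0).
  move=> j jr0; rewrite /w indicE; have [/set_mem Hj|//] := boolP (pdigits p x \in K j).
  have := disj jr0; move/seteqP => [/(_ (pdigits p x)) H _].
  by case: (H (conj Hj Hr0)).
rewrite big1 ?ler01 // => j _; rewrite /w indicE; have [/set_mem Hj|//] := boolP (pdigits p x \in K j).
by case: Hn; exists j.
Qed.

Lemma sum_bound (g : Zpad p -> R[i]) : Zp_L2 g ->
  \sum_(r : J) ComplexField.Normc.normc (Zp_ip (e r) g) ^+ 2 <= complex.Re (Zp_ip g g).
Proof.
move=> Hg; have [mre mim f1 f2] := L2_parts Hg.
pose h := fun x : R => complex.Re (g (pdigits p x)) ^+ 2 + complex.Im (g (pdigits p x)) ^+ 2.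
have ih : mu.-integrable D (EFin \o h) by apply: DI; exact: int_sq.
have iwh j : mu.-integrable D (EFin \o (fun x => w j x * h x)) by exact: int_w (mw j) (w01 j) ih.
apply: (le_trans (ler_sum _ (fun r _ => pi_bound r Hg))).
rewrite -RS //.
have -> : complex.Re (Zp_ip g g) = \int[mu]_(x in D) h x.
  by rewrite /Zp_ip /=; apply: eq_Rintegral => x _; rewrite ReCC.
apply: le_Rintegral; first exact: mI01.
- exact: sumI.
- exact: ih.
move=> x _; rewrite -mulr_suml.
have h0 : 0 <= h x by rewrite /h addr_ge0 // sqr_ge0.
first [by rewrite ler_piMl // sum_w | by apply: ler_piMl => //; exact: sum_w | by rewrite ler_piMl //; exact: sum_w].
Qed.

Lemma bess (U : R -> (Zpad p -> R[i]) -> (Zpad p -> R[i]))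
  (hL2 : forall t f, Zp_L2 f -> Zp_L2 (U t f))
  (hip : forall t f g, Zp_L2 f -> Zp_L2 g -> Zp_ip (U t f) (U t g) = Zp_ip f g) t v :
  \sum_(r : J) ComplexField.Normc.normc (Zp_ip (fun x => c r * Zp_ind R (K r) x)
                    (U t (fun x => c v * Zp_ind R (K v) x))) ^+ 2 <= 1.
Proof.
apply: le_trans (sum_bound (hL2 t _ (L2_e v))) _.
rewrite hip; try exact: L2_e.
apply: (@eq_ind R 1 (fun z => z <= 1) (lexx 1)); symmetry; exact: Re_norm.
Qed.

Lemma main_tm (U : R -> (Zpad p -> R[i]) -> (Zpad p -> R[i]))
  (hL2 : forall t f, Zp_L2 f -> Zp_L2 (U t f))
  (hip : forall t f g, Zp_L2 f -> Zp_L2 g -> Zp_ip (U t f) (U t g) = Zp_ip f g) :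
  transition_matrix
    (ext_infty (fun (t : R) (r v : J) =>
       ComplexField.Normc.normc (Zp_ip (fun x => c r * Zp_ind R (K r) x)
                    (U t (fun x => c v * Zp_ind R (K v) x))) ^+ 2)).
Proof.
move=> t _.
have bs := bess hL2 hip t.
split.
- case=> [s|] [r|] /=.
  + rewrite sqr_ge0 /=; apply: le_trans (bs r).
    rewrite (bigD1 s) //= lerDl sumr_ge0 // => i _; exact: sqr_ge0.
  + by rewrite lexx ler01.
  + have := bs r; set S := \sum_(j : J) _ => HS.
    have S0 : 0 <= S by apply: sumr_ge0 => i _; exact: sqr_ge0.
    apply/andP; split; lra.
  + by rewrite ler01 lexx.
- case=> [r|]; rewrite sum_opt /=.
  + by rewrite subrK.
  + by rewrite big1 // addr0.
Qed.

End Main.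


Unset Implicit Arguments.

Theorem theorem2 (R : realType) (p : nat) (hp : prime p)
    (H : (Zpad p -> R[i]) -> (Zpad p -> R[i]))
    (U : R -> (Zpad p -> R[i]) -> (Zpad p -> R[i]))
    (J : finType) (N : set (Zpad p)) (K : J -> set (Zpad p)) (c : J -> R[i]) :
  selfadjoint_on_test H ->
  is_exp_group H U ->
  Zp_null R N ->
  (forall j, open (K j) /\ compact (K j)) ->
  (forall j k, j != k -> K j `&` K k = set0) ->
  ~` N = \bigcup_(j in [set: J]) K j ->
  (forall v, Zp_norm2 (fun x => c v * Zp_ind R (K v) x) = 1) ->
  transition_matrix
    (ext_infty (fun (t : R) (r v : J) =>
       ComplexField.Normc.normc (Zp_ip (fun x => c r * Zp_ind R (K r) x)
                    (U t (fun x => c v * Zp_ind R (K v) x))) ^+ 2)).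
Proof.
move=> _ [[hL2 _ _ hip _] _] _ hK hdisj _ hn.
have p0 : (0 < p)%N := prime_gt0 hp.
have oK : forall j, open (K j) by move=> j; case: (hK j).
exact: (main_tm p0 oK hdisj hn hL2 hip).
Qed.
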